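(* For every positive integer $d$, there exists a finite special $2$-group $G$ such that the commuting graph $\Gamma(G)$ of $G$ has diameter greater than $d$.
   Context: For a group $G$, the commuting graph $\Gamma(G)$ is the graph whose vertices are the non-central elements of $G$, two distinct vertices being adjacent if and only if they commute in $G$. A finite $p$-group $G$ is special if $G$ is elementary abelian or $Z(G)=[G,G]=\Phi(G)$ (the Frattini subgroup), this common subgroup being elementary abelian. *)

(* Defs.v *)
From mathcomp Require Import all_boot all_fingroup all_solvable.
Set Implicit Arguments. Unset Strict Implicit. Unset Printing Implicit Defensive.
Local Open Scope group_scope.

Definition special_pgroup (gT : finGroupType) (p : nat) (G : {group gT}) : Prop :=
  p.-group G /\
  (p.-abelem G \/
   ('Z(G) = G^`(1) /\ G^`(1) = 'Phi(G) /\ p.-abelem 'Z(G))).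

Definition cg_vertex (gT : finGroupType) (G : {group gT}) (x : gT) : bool :=
  x \in G :\: 'Z(G).

Definition cg_adj (gT : finGroupType) (G : {group gT}) : rel gT :=
  fun x y => [&& cg_vertex G x, cg_vertex G y, x != y & x * y == y * x].

Definition cg_dist_le (gT : finGroupType) (G : {group gT}) (x y : gT) (n : nat) : Prop :=
  exists p : seq gT, [&& path (cg_adj G) x p, last x p == y & size p <= n].

Definition cg_connected (gT : finGroupType) (G : {group gT}) : Prop :=
  forall x y, cg_vertex G x -> cg_vertex G y -> exists n, cg_dist_le G x y n.

Definition cg_diam_gt (gT : finGroupType) (G : {group gT}) (d : nat) : Prop :=
  exists x y, [/\ cg_vertex G x, cg_vertex G y & ~ cg_dist_le G x y d].

(* Main.v *)
Require Import Defs.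
From mathcomp Require Import all_boot all_fingroup all_solvable.
From HB Require Import structures.
From mathcomp Require Import all_algebra zify ring.
Set Implicit Arguments. Unset Strict Implicit. Unset Printing Implicit Defensive.
Import GRing.Theory.
Import Pdiv.Field.

Section Inv.
Local Open Scope ring_scope.
Variable F : fieldType.

Fixpoint Nf (k : nat) (a b : {poly F}) : nat :=
  if k is k'.+1 then (if b == 0 then 0 else (Nf k' b (a %% b)).+1) else 0.

Lemma Nf_small k (a b : {poly F}) : (size b <= 1)%N -> (Nf k a b <= 1)%N.
Proof.
case: k => [|k] //= sb; case: eqP => // /eqP b0.
have [c eb] : exists c, b = c%:P by exists b`_0; apply/size1_polyC.
have c0 : c != 0 by apply: contraNneq b0; rewrite eb => ->.
rewrite eb modpC //; case: k => //= k; by rewrite eqxx.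
Qed.

Lemma Nf_inv k (a b c d : {poly F}) : (size b <= k)%N -> (size d <= k)%N ->
  leq (size (a * d - b * c)) 1%N -> (c != 0) || (d != 0) ->
  (Nf k a b <= (Nf k c d).+1)%N.
Proof.
elim: k a b c d => [|k IH] a b c d sb sd sD cd0 //.
have [sb1|sb2] := leqP (size b) 1%N.
  by apply: leq_trans (Nf_small _ _ sb1) _.
have b0 : b != 0 by rewrite -size_poly_eq0; lia.
have d0 : d != 0.
  apply/negP=> /eqP d0; move: sD; rewrite d0 mulr0 sub0r size_polyN.
  move: cd0; rewrite d0 eqxx orbF => c0.
  rewrite size_mul //; move: c0; rewrite -size_poly_gt0 => c0 H; move: H c0 sb2; move: (size b) (size c); clear; lia.
set q := a %/ b; set r := a %% b; set q' := c %/ d; set r' := c %% d.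
have ea : a = q * b + r by rewrite /q /r -divp_eq.
have ec : c = q' * d + r' by rewrite /q' /r' -divp_eq.
have sr : (size r < size b)%N by rewrite ltn_modp.
have sr' : (size r' < size d)%N by rewrite ltn_modp.
have key : b * r' - r * d = (q - q') * b * d - (a * d - b * c).
  rewrite ea ec; ring.
have eqq : q = q'.
  apply/eqP; rewrite -subr_eq0; apply: contraT => nq.
  have s1 : leq (size (b * r' - r * d)) (size b + size d).-2.
    apply: leq_trans (size_polyD _ _) _; rewrite size_polyN geq_max.
    have H1 : forall x y : {poly F}, leq (size (x * y)) (size x + size y).-1 by move=> x y; apply: size_mul_leq.
    have pd : (0 < size d)%N by rewrite size_poly_gt0.
    apply/andP; split.
      apply: leq_trans (H1 _ _) _; move: sr' pd sb2; move: (size b) (size d) (size r'); clear; lia.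
    apply: leq_trans (H1 _ _) _; move: sr pd sb2; move: (size b) (size d) (size r); clear; lia.
  have s2 : leq (size b + size d).-1 (size ((q - q') * b * d)).
    rewrite !size_mul ?mulf_neq0 //; move: nq; rewrite -size_poly_gt0 => nq.
    have pd : (0 < size d)%N by rewrite size_poly_gt0.
    move: nq pd sb2; move: (size b) (size d) (size (q - q')); clear; lia.
  have s3 : size ((q - q') * b * d - (a * d - b * c)) = size ((q - q') * b * d).
    have pd : (0 < size d)%N by rewrite size_poly_gt0.
    rewrite size_polyDl // size_polyN; move: sD s2 sb2 pd; move: (size b) (size d) (size (a * d - b * c)) (size ((q - q') * b * d)); clear; lia.
  move: s1 s2; rewrite key s3; have pd : (0 < size d)%N by rewrite size_poly_gt0.
  move: pd sb2; move: (size b) (size d) (size ((q - q') * b * d)); clear; lia.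
rewrite /= (negbTE b0) (negbTE d0) ltnS.
apply: IH.
- move: sb sr; move: (size b) (size r); clear; lia.
- move: sd sr'; move: (size d) (size r'); clear; lia.
- by rewrite key eqq subrr !mul0r sub0r size_polyN.
- by rewrite d0.
Qed.

Fixpoint fibp (n : nat) : {poly F} :=
  match n with 0 => 0 | 1 => 1 | (n'.+1 as m).+1 => 'X * fibp m + fibp n' end.

Lemma size_fibp2 n : size (fibp n) = n /\ size (fibp n.+1) = n.+1.
Proof.
elim: n => [|n [h1 h2]]; first by rewrite /= size_poly0 size_poly1.
split=> //=.
rewrite (mulrC 'X) size_polyDl; first by rewrite size_mulX -?size_poly_eq0 h2.
by rewrite size_mulX -?size_poly_eq0 h2 // h1.
Qed.

Lemma size_fibp n : size (fibp n) = n.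
Proof. by case: (size_fibp2 n). Qed.

Lemma Nf_fib k n : (n <= k)%N -> Nf k (fibp n.+1) (fibp n) = n.
Proof.
elim: n k => [|n IH] [|k] hk //=; first by rewrite eqxx.
have f0 : fibp n.+1 != 0 by rewrite -size_poly_eq0 size_fibp.
rewrite (negbTE f0) (_ : _ %% _ = fibp n) ?IH //.
rewrite modpD modp_mull add0r modp_small //; move: (size_fibp n.+1) => /= ->; by rewrite size_fibp.
Qed.

Lemma descent (a b : {poly F}) m : (size a <= m)%N -> (size b <= m)%N -> b != 0 ->
  exists c d : {poly F}, [/\ (size c <= m)%N, (size d < size b)%N,
     (c != 0) || (d != 0) & leq (size (a * d - c * b)) 1%N].
Proof.
move=> sa sb b0.
set g := gcdp a b.
have g0 : g != 0 by rewrite gcdp_eq0 negb_and b0 orbT.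
have [sg|sg] := leqP (size g) 1%N.
  have cop : coprimep a b.
    rewrite /coprimep -/g eqn_leq sg /= size_poly_gt0 //.
  have [[u v] /= Huv] := Bezout_eq1_coprimepP a b cop.
  set d := u %% b; set w := v + (u %/ b) * a.
  have eu : u = (u %/ b) * b + d by rewrite /d -divp_eq.
  have E : d * a + w * b = 1 by rewrite -Huv eu /w; ring.
  have sd : (size d < size b)%N by rewrite ltn_modp.
  exists (- w), d; split.
  - rewrite size_polyN.
    have [->|w0] := eqVneq w 0; first by rewrite size_poly0.
    have h0 : w * b = 1 - d * a by rewrite -E; ring.
    have h : size (w * b) = size (1 - d * a) by rewrite h0.
    move: h; rewrite size_mul // => h.
    have h2 := size_polyD 1 (- (d * a)).
    rewrite size_polyN size_poly1 in h2.
    have h3 := size_polyMleq d a.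
    have pb : (0 < size b)%N by rewrite size_poly_gt0.
    move: h h2 h3 pb sd sa sb; move: (size w) (size b) (size d) (size a) (size (1 - d * a)) (size (d * a)); clear; lia.
  - by [].
  - apply/orP; have [d0|dn] := eqVneq d 0; [left|by right].
    rewrite oppr_eq0; apply: contra_eqN E => /eqP w0.
    by rewrite d0 w0 !mul0r addr0 eq_sym oner_eq0.
  - rewrite (_ : _ - _ = 1) ?size_poly1 //; rewrite -E; ring.
set c := a %/ g; set d := b %/ g.
have ea : a = c * g by rewrite /c divpK // dvdp_gcdl.
have eb : b = d * g by rewrite /d divpK // dvdp_gcdr.
have d0 : d != 0 by apply: contraNneq b0; rewrite eb => ->; rewrite mul0r.
exists c, d; split.
- rewrite /c size_divp //; move: sa; move: (size a) (size g); clear; lia.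
- rewrite /d size_divp //; have := size_poly_gt0 b; rewrite b0.
  move: sg; move: (size b) (size g); clear; lia.
- by rewrite d0 orbT.
- rewrite ea eb (_ : _ - _ = 0) ?size_poly0 //; ring.
Qed.
End Inv.

Section Grp.
Local Open Scope ring_scope.
Variable n : nat.
Notation F := 'F_2.
Definition mm := n.+2.
Definition kz := (n.+1).*2.
Definition VT := {poly_mm F}.
Definition ZT := {poly_kz F}.
Definition TT := (VT * VT * ZT)%type.

Lemma valD_V (x y : VT) : val (x + y) = val x + val y. Proof. by []. Qed.
Lemma valN_V (x : VT) : val (- x) = - val x. Proof. by []. Qed.
Lemma valD_Z (x y : ZT) : val (x + y) = val x + val y. Proof. by []. Qed.
Lemma val0_Z : val (0 : ZT) = 0. Proof. by []. Qed.
Lemma val0_V : val (0 : VT) = 0. Proof. by []. Qed.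

Definition cc (u w : VT * VT) : {poly F} := (val u.1 * val w.2) %/ 'X.

Lemma size_cc u w : (size (cc u w) <= kz)%N.
Proof.
rewrite /cc size_divp ?polyX_eq0 // size_polyX.
have h1 := size_npoly u.1; have h2 := size_npoly w.2.
apply: leq_trans (leq_sub2r _ (size_polyMleq _ _)) _.
rewrite /kz /mm in h1 h2 *; move: h1 h2; move: (size (val u.1)) (size (val w.2)); clear; lia.
Qed.

Lemma ccDl u u' w : cc (u.1 + u'.1, u.2 + u'.2) w = cc u w + cc u' w.
Proof. by rewrite /cc /= mulrDl divpD. Qed.
Lemma ccDr u w w' : cc u (w.1 + w'.1, w.2 + w'.2) = cc u w + cc u w'.
Proof. by rewrite /cc /= mulrDr divpD. Qed.
Lemma ccNl u w : cc (- u.1, - u.2) w = - cc u w.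
Proof. by rewrite /cc /= mulNr divpN. Qed.
Lemma cc0l w : cc (0, 0) w = 0.
Proof. by rewrite /cc /= mul0r div0p. Qed.
Lemma cc0r w : cc w (0, 0) = 0.
Proof. by rewrite /cc /= mulr0 div0p. Qed.

Lemma size_Z (z : ZT) : (size (val z) <= kz)%N. Proof. exact: size_npoly. Qed.

Definition mulT (x y : TT) : TT :=
  ((x.1.1 + y.1.1, x.1.2 + y.1.2), npolyp kz (val x.2 + val y.2 + cc x.1 y.1)).
Definition oneT : TT := ((0, 0), 0).
Definition invT (x : TT) : TT :=
  ((- x.1.1, - x.1.2), npolyp kz (- val x.2 + cc x.1 x.1)).

Lemma npolyp_id (p : {poly F}) : (size p <= kz)%N -> val (npolyp kz p : ZT) = p.
Proof. exact: npolypK. Qed.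

Lemma mulT_z x y : val (mulT x y).2 = val x.2 + val y.2 + cc x.1 y.1.
Proof.
rewrite /mulT /= npolyp_id //.
by rewrite (leq_trans (size_polyD _ _)) // geq_max size_cc andbT
   (leq_trans (size_polyD _ _)) // geq_max !size_Z.
Qed.

Lemma invT_z x : val (invT x).2 = - val x.2 + cc x.1 x.1.
Proof.
rewrite /invT /= npolyp_id //.
by rewrite (leq_trans (size_polyD _ _)) // geq_max size_cc andbT size_polyN size_Z.
Qed.

Lemma TT_eq (x y : TT) : x.1.1 = y.1.1 -> x.1.2 = y.1.2 -> val x.2 = val y.2 -> x = y.
Proof.
by case: x => [[a b] z]; case: y => [[a' b'] z'] /= -> -> /val_inj ->.
Qed.

Lemma mulTA : associative mulT.
Proof.
move=> x y z; apply: TT_eq; [by rewrite /= addrA | by rewrite /= addrA|].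
rewrite !mulT_z /=.
have e1 := ccDr x.1 y.1 z.1; have e2 := ccDl x.1 y.1 z.1.
rewrite /= in e1 e2; rewrite e1 e2; ring.
Qed.

Lemma mul1T : left_id oneT mulT.
Proof.
move=> x; apply: TT_eq; [by rewrite /= add0r | by rewrite /= add0r|].
rewrite mulT_z /= cc0l; by rewrite addr0 add0r.
Qed.

Lemma mulVT : left_inverse oneT invT mulT.
Proof.
move=> x; apply: TT_eq; [by rewrite /= addNr | by rewrite /= addNr|].
rewrite mulT_z invT_z /=.
have e := ccNl x.1 x.1; rewrite /= in e; rewrite e; rewrite addrC addrA; ring.
Qed.

End Grp.

Definition TG (n : nat) := TT n.
HB.instance Definition _ (n : nat) := Finite.on (TG n).
HB.instance Definition _ (n : nat) := Finite_isGroup.Build (TG n) (@mulTA n) (@mul1T n) (@mulVT n).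


Section GP.
Variable n : nat.
Local Open Scope ring_scope.
Notation G := (TG n).
Local Notation F := 'F_2.

Lemma mulTGE (x y : G) : (x * y)%g = mulT x y. Proof. by []. Qed.

Lemma commTG (x y : G) : ((x * y == y * x)%g) = (cc x.1 y.1 == cc y.1 x.1).
Proof.
rewrite !mulTGE; apply/eqP/eqP => [e|e].
  have := congr1 (fun t : TT n => val t.2) e; rewrite /= !mulT_z.
  by rewrite [val y.2 + _]addrC => /addrI.
apply: TT_eq; rewrite /= ?[x.1.1 + _]addrC ?[x.1.2 + _]addrC // !mulT_z e.
by rewrite [val y.2 + _]addrC.
Qed.

Definition vX : VT n := npolyp (mm n) 'X.
Definition v1 : VT n := npolyp (mm n) 1.
Lemma val_vX : val vX = 'X.
Proof. by apply: npolypK; rewrite size_polyX. Qed.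
Lemma val_v1 : val v1 = 1.
Proof. by apply: npolypK; rewrite size_poly1. Qed.

Lemma VT_eq0 (a : VT n) : (a == 0) = (val a == 0).
Proof. by apply/eqP/eqP => [->|h] //; apply: val_inj. Qed.

Lemma inZ (x : G) : (x \in ('Z([set: G]))%g) = (x.1 == (0, 0)).
Proof.
apply/centerP/eqP => [[_ cx]|e].
  have c1 := cx (((0 : VT n), vX), 0 : ZT n) (in_setT _).
  have c2 := cx ((vX, (0 : VT n)), 0 : ZT n) (in_setT _).
  move: c1 c2; rewrite /commute => /eqP c1 /eqP c2.
  rewrite commTG /cc /= val_vX in c1; rewrite commTG /cc /= val_vX in c2.
  move/eqP: c1; rewrite mulpK ?polyX_eq0 // mul0r div0p => /eqP a0.
  move/eqP: c2; rewrite mulKp ?polyX_eq0 // mulr0 div0p => /eqP b0.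
  clear cx; case: x a0 b0 => [[a b] z] /= a0 b0.
  congr (_, _); apply: val_inj; [exact: (eqP a0) | exact: (esym (eqP b0))].
split; first by rewrite in_setT.
move=> y _; apply/eqP; rewrite commTG e.
by rewrite cc0l cc0r.
Qed.

Definition kk (p : {poly F}) : G := (((0 : VT n), (0 : VT n)), npolyp (kz n) p).

Lemma size_ccB (u w : VT n * VT n) : leq (size (cc u w - cc w u)) (kz n).
Proof.
by rewrite (leq_trans (size_polyD _ _)) // geq_max size_polyN !size_cc.
Qed.

Lemma val_kk (p : {poly F}) : leq (size p) (kz n) -> val (kk p).2 = p.
Proof. exact: npolypK. Qed.

Lemma commTE (x y : G) : ([~ x, y] = kk (cc x.1 y.1 - cc y.1 x.1))%g.
Proof.
have E : (x * y = y * x * kk (cc x.1 y.1 - cc y.1 x.1))%g.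
  rewrite !mulTGE; apply: TT_eq.
  - by rewrite /= addr0 addrC.
  - by rewrite /= addr0 addrC.
  rewrite mulT_z [in RHS]mulT_z [in RHS]mulT_z val_kk ?size_ccB //.
  rewrite (_ : (kk _).1 = (0, 0)) // cc0r /= [val y.2 + _]addrC; ring.
rewrite commgEl conjgE !mulgA -invMg -mulgA E.
by rewrite mulKg.
Qed.

Lemma vpoly (p : {poly F}) : leq (size p) (mm n) -> exists v : VT n, val v = p.
Proof. by move=> h; exists (npolyp (mm n) p); apply: npolypK. Qed.

Lemma der_Z : ([set: G]^`(1) = 'Z([set: G]))%g.
Proof.
apply/eqP; rewrite eqEsubset; apply/andP; split.
  rewrite derg1 /commutator gen_subG; apply/subsetP => _ /imset2P [x y _ _ ->].
  by rewrite inZ commTE.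
apply/subsetP => x; rewrite inZ => /eqP x1.
set z := val x.2.
have sz : leq (size z) (kz n) by apply: size_npoly.
set P := 'X * z.
have sP : leq (size P) (kz n).+1.
  apply: leq_trans (size_polyMleq _ _) _; rewrite size_polyX.
  move: sz; move: (size z); clear; lia.
have [d hd] : exists d : VT n, val d = P %% 'X^(n.+1).
  apply: vpoly; have := ltn_modp P ('X^(n.+1) : {poly F}).
  rewrite size_polyXn monic_neq0 ?monicXn // /mm; move: (size _); clear; lia.
have [c hc] : exists c : VT n, val c = - (P %/ 'X^(n.+1)).
  apply: vpoly; rewrite size_polyN size_divp ?monic_neq0 ?monicXn // size_polyXn /mm.
  rewrite /kz in sP; move: sP; move: (size P); clear; lia.
have -> : x = [~ ((v1, npolyp (mm n) 'X^(n.+1)), 0 : ZT n) : G, ((c, d), 0 : ZT n)]%g.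
  rewrite commTE; apply: TT_eq; rewrite ?x1 //.
  rewrite val_kk ?size_ccB // /cc /= val_v1 npolypK ?size_polyXn // hd hc mul1r.
  rewrite -divpN -divpD mulNr opprK.
  by rewrite addrC -divp_eq /P mulKp ?polyX_eq0.
by apply: mem_commg; rewrite in_setT.
Qed.

Lemma poly2 (p : {poly F}) : p + p = 0.
Proof. by apply: addrr_pchar2; rewrite pchar_poly pchar_Fp. Qed.

Lemma VT2 (u : VT n) : u + u = 0.
Proof. by apply: val_inj; rewrite /= poly2. Qed.

Lemma pgT : (2.-group [set: G])%g.
Proof.
rewrite /pgroup cardsT card_prod card_prod !card_npoly card_Fp //.
by rewrite -!expnD pnatX pnat_id.
Qed.

Lemma sqrZ (x : G) : (x ^+ 2 \in 'Z([set: G]))%g.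
Proof. by rewrite expgS expg1 inZ mulTGE /mulT /= !VT2. Qed.

Lemma Phi_Z : ('Phi([set: G]) = 'Z([set: G]))%g.
Proof.
rewrite (Phi_joing pgT) der_Z; apply/eqP; rewrite eqEsubset joing_subl andbT.
rewrite join_subG subxx /= (MhoE 1 pgT) gen_subG.
by apply/subsetP => _ /imsetP [x _ ->]; rewrite expn1 sqrZ.
Qed.

Lemma abelZ : (2.-abelem 'Z([set: G]))%g.
Proof.
apply/abelemP => //; split; first exact: center_abelian.
move=> x; rewrite inZ => /eqP x1.
rewrite expgS expg1 mulTGE; apply: TT_eq; [by rewrite /= x1 /= addr0 | by rewrite /= x1 /= addr0|].
by rewrite mulT_z x1 cc0l addr0 poly2.
Qed.
End GP.

Section GR.
Variable n : nat.
Local Notation T := (TG n).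
Local Notation F := 'F_2.
Local Notation GG := ([set: T]%G).
Local Open Scope ring_scope.

Lemma vertE (x : T) : cg_vertex GG x = (x.1 != (0, 0)).
Proof. by rewrite /cg_vertex in_setD inZ in_setT andbT. Qed.

Lemma ccE (u w : VT n * VT n) :
  (cc u w == cc w u) = leq (size (val u.1 * val w.2 - val w.1 * val u.2)) 1%N.
Proof.
rewrite -subr_eq0 /cc -divpN -divpD -size_poly_eq0 size_divp ?polyX_eq0 //.
by rewrite size_polyX; move: (size _); clear; lia.
Qed.

Definition NN (x : T) := Nf (mm n) (val x.1.1) (val x.1.2).

Lemma adjN (x y : T) : cg_adj GG x y -> (NN y <= (NN x).+1)%N.
Proof.
case/and4P; rewrite !vertE => vx vy _; rewrite commTG ccE => h.
apply: Nf_inv; try exact: size_npoly.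
  have -> : val y.1.1 * val x.1.2 - val y.1.2 * val x.1.1 = - (val x.1.1 * val y.1.2 - val y.1.1 * val x.1.2) by ring.
  by rewrite size_polyN.
move: vx; apply: contraR; rewrite negb_or !negbK => /andP [h1 h2].
by case: (x.1) h1 h2 => a b /= h1 h2; apply/eqP; congr (_, _); apply: val_inj; apply/eqP.
Qed.

Lemma pathN (x : T) p : path (cg_adj GG) x p -> (NN (last x p) <= NN x + size p)%N.
Proof.
elim: p x => [|y p IH] x /=; first by rewrite addn0.
case/andP => hxy hp; have := IH _ hp; have := adjN hxy.
move: (NN x) (NN y) (NN (last y p)) (size p); clear; lia.
Qed.

Definition h0 : T := ((v1 n, 0), 0).

Lemma pair0E (x : T) : (x.1 != (0, 0)) = (val x.1.1 != 0) || (val x.1.2 != 0).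
Proof.
case: x => [[a b] z] /=; rewrite -negb_and; congr negb.
Qed.

Lemma base (x : T) : val x.1.2 = 0 -> x.1 != (0, 0) -> connect (cg_adj GG) x h0.
Proof.
move=> b0 vx; have [->|ne] := eqVneq x h0; first exact: connect0.
apply: connect1; rewrite /cg_adj !vertE vx ne /=.
rewrite commTG ccE /= val_v1 b0 mulr0 mulr0 subr0 size_poly0 andbT.
by rewrite (pair0E h0) /= val_v1 oner_eq0.
Qed.

Lemma reach (x : T) : cg_vertex GG x -> connect (cg_adj GG) x h0.
Proof.
rewrite vertE; move: x.
suff H : forall k (x : T), (size (val x.1.2) <= k)%N -> x.1 != (0, 0) -> connect (cg_adj GG) x h0.
  by move=> x; apply: (H _ x (leqnn _)).
elim=> [|k IH] x sk vx.
  by apply: base => //; apply/eqP; rewrite -size_poly_eq0; move: sk; move: (size _); clear; lia.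
have [b0|b0] := eqVneq (val x.1.2) 0; first exact: base.
have [c [d [sc sd cd0 hD]]] := descent (size_npoly x.1.1) (size_npoly x.1.2) b0.
have [vc hc] := vpoly sc.
have [vd hd] : exists v : VT n, val v = d.
  apply: vpoly; have := size_npoly x.1.2; move: sd; rewrite /mm; move: (size d) (size (val x.1.2)); clear; lia.
set y : T := ((vc, vd), 0).
have vy : y.1 != (0, 0) by rewrite pair0E /= hc hd.
apply: connect_trans (IH y _ vy); last by rewrite /= hd; move: sk sd; move: (size d) (size (val x.1.2)); clear; lia.
apply: connect1; rewrite /cg_adj !vertE vx vy /=.
rewrite commTG ccE /= hc hd hD andbT.
by apply/eqP => exy; move: sd; rewrite exy /= hd ltnn.
Qed.
End GR.

Lemma adj_sym n : symmetric (cg_adj [set: TG n]%G).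
Proof.
move=> x y; rewrite /cg_adj; apply/and4P/and4P => [][h1 h2 h3 /eqP h4];
  by split => //; [rewrite eq_sym | rewrite h4].
Qed.

Theorem theorem1p1 (d : nat) : 0 < d ->
  exists (gT : finGroupType) (G : {group gT}),
    [/\ special_pgroup 2 G, cg_connected G & cg_diam_gt G d].
Proof.
move=> _; exists (TG d), [set: TG d]%G; split.
- split; first exact: pgT.
  right; split; first by rewrite der_Z.
  split; first by rewrite der_Z Phi_Z.
  exact: abelZ.
- move=> x y vx vy.
  have hxy : connect (cg_adj [set: TG d]%G) x y.
    apply: connect_trans (reach vx) _.
    by rewrite (sym_connect_sym (@adj_sym d)); apply: reach.
  case/connectP: hxy => p hp ->; exists (size p), p.
  by rewrite hp eqxx leqnn.
- pose y0 : TG d := ((npolyp (mm d) (fibp _ (d.+2)), npolyp (mm d) (fibp _ d.+1)), 0%R).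
  have e1 : val y0.1.1 = fibp _ d.+2 by apply: npolypK; rewrite size_fibp.
  have e2 : val y0.1.2 = fibp _ d.+1 by apply: npolypK; rewrite size_fibp /mm.
  exists (h0 d), y0; split.
  + by rewrite vertE pair0E /= val_v1 GRing.oner_eq0.
  + by rewrite vertE pair0E e1 -size_poly_eq0 size_fibp.
  case=> p /and3P [hp /eqP hl sp].
  have := pathN hp; rewrite hl /NN e1 e2 Nf_fib // /= val_v1 eqxx.
  by move: sp; move: (size p); clear; lia.
Qed.
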